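(* Let $X$ be a compact metric space and $T:X\to X$ a local homeomorphism. Then \[{\rm dim}_{\rm tow}(X,T)\le 2\,{\rm dim}_{\rm Rok}(X,T)+1.\]
   Context: For $j\ge0$, $T^{-j}(A)$ is the preimage under $T^j$. Rokhlin dimension: an open $N$-Rokhlin tower is a collection $\{U_0,\dots,U_{N-1}\}$ of nonempty open sets with $U_k=T^{-1}(U_{k-1})$ for $k\ge1$ and pairwise disjoint closures; ${\rm dim}_{\rm Rok}(X,T)$ is the least $d$ such that for every $N\ge1$, $X$ is covered by the members of at most $d+1$ open $N$-Rokhlin towers. Tower dimension: ${\rm dim}_{\rm tow}(X,T)$ is the least $d\in\mathbb{N}$ such that for every finite $E\subseteq\mathbb{Z}$ there are finitely many pairs $(V_1,S_1),\dots,(V_s,S_s)$ with $V_i\subseteq X$ open and $S_i\subseteq\mathbb{N}$ finite such that: (a) $T^{-m}(\overline{V_i})\cap T^{-n}(\overline{V_i})=\varnothing$ for distinct $m,n\in S_i$; (b) the family $\{T^{-n}(V_i):n\in S_i,1\le i\le s\}$ has chromatic number at most $d+1$, i.e. can be partitioned into at most $d+1$ subfamilies each consisting of pairwise disjoint sets; (c) this family covers $X$; (d) for every $x\in X$ there are $i$ and $n\in S_i$ with $x\in T^{-n}(V_i)$ and $E+n\subseteq S_i$. (Value $\infty$ if no such $d$.) *)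

(* Defs.v *)
From HB Require Import structures.
From mathcomp Require Import all_boot all_order all_algebra.
From mathcomp Require Import all_classical all_reals all_analysis.
Set Implicit Arguments. Unset Strict Implicit. Unset Printing Implicit Defensive.
Import Order.TTheory GRing.Theory Num.Theory.
Local Open Scope classical_set_scope.

Section Dims.
Context {R : realType} {X : metricType R}.

(* T is a local homeomorphism: continuous, and every point has an open
   neighbourhood U such that T restricted to U is injective and maps open
   subsets of U onto open sets (so T|U : U -> T(U) is a homeomorphism onto
   an open set). *)
Definition local_homeomorphism (T : X -> X) : Prop :=
  continuous T /\
  forall x : X, exists U : set X,
    [/\ open U, U x, {in U &, injective T} &
        forall V : set X, open V -> V `<=` U -> open (T @` V)].

Definition preT (T : X -> X) (j : nat) (A : set X) : set X := (iter j T) @^-1` A.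

Definition open_rokhlin_tower (T : X -> X) (N : nat) (U : nat -> set X) : Prop :=
  [/\ forall k, (k < N)%N -> open (U k) /\ U k !=set0,
      forall k, (0 < k < N)%N -> U k = preT T 1 (U k.-1) &
      forall k l, (k < N)%N -> (l < N)%N -> k <> l ->
        closure (U k) `&` closure (U l) = set0].

Definition rokhlin_prop (T : X -> X) (d : nat) : Prop :=
  forall N : nat, (1 <= N)%N ->
    exists (m : nat) (U : nat -> nat -> set X),
      [/\ (m <= d.+1)%N,
          forall i, (i < m)%N -> open_rokhlin_tower T N (U i) &
          forall x : X, exists i k, [/\ (i < m)%N, (k < N)%N & U i k x]].

Definition tower_prop (T : X -> X) (d : nat) : Prop :=
  forall E : set int, finite_set E ->
    exists (s : nat) (V : nat -> set X) (S : nat -> set nat),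
      [/\ forall i, (i < s)%N -> open (V i) /\ finite_set (S i),
          forall i m n, (i < s)%N -> S i m -> S i n -> m <> n ->
            preT T m (closure (V i)) `&` preT T n (closure (V i)) = set0,
          (* (b) the family {T^{-n}(V_i) : n in S_i, i < s} (a set of sets)
             has chromatic number at most d+1 *)
          exists c : set X -> nat,
            (forall i n, (i < s)%N -> S i n -> (c (preT T n (V i)) <= d)%N) /\
            (forall i n j m, (i < s)%N -> S i n -> (j < s)%N -> S j m ->
               c (preT T n (V i)) = c (preT T m (V j)) ->
               preT T n (V i) <> preT T m (V j) ->
               preT T n (V i) `&` preT T m (V j) = set0),
          forall x : X, exists i n, [/\ (i < s)%N, S i n & preT T n (V i) x] &
          forall x : X, exists i n,
            [/\ (i < s)%N, S i n, preT T n (V i) x &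
                forall e, E e -> exists k, S i k /\ (k%:Z = e + n%:Z)%R]].

(* dimensions valued in nat extended by infinity (None = infinity):
   the least d satisfying P, or None if there is none *)
Lemma least_dim_ex (P : nat -> Prop) :
  (exists d, P d) -> exists d, `[< P d >].
Proof. by move=> [d hd]; exists d; apply/asboolP. Qed.

Definition least_dim (P : nat -> Prop) : option nat :=
  match pselect (exists d, P d) with
  | left h => Some (ex_minn (least_dim_ex h))
  | right _ => None
  end.

Definition dim_Rok (T : X -> X) : option nat := least_dim (rokhlin_prop T).
Definition dim_tow (T : X -> X) : option nat := least_dim (tower_prop T).

End Dims.

Definition xle (a b : option nat) : Prop :=
  match a, b with
  | _, None => True
  | None, Some _ => False
  | Some m, Some n => (m <= n)%N
  end.

Definition xtwice_plus1 (a : option nat) : option nat :=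
  omap (fun d => (2 * d + 1)%N) a.

(* Main.v *)
Require Import Defs.
From mathcomp Require Import all_boot all_order all_algebra.
From mathcomp Require Import all_classical all_reals all_analysis.
From mathcomp Require Import zify.
Local Open Scope classical_set_scope.

Section Helpers.
Context {R : realType} {X : metricType R} (T : X -> X).

Lemma preTD m n (A : set X) : preT T m (preT T n A) = preT T (n + m) A.
Proof. by apply/funext => x; rewrite /preT /= iterD. Qed.

Lemma preT0 (A : set X) : preT T 0 A = A.
Proof. by apply/funext. Qed.

Lemma iter_cont n : continuous T -> continuous (iter n T).
Proof.
move=> hc; elim: n => [|n IH] x /=; first exact: cvg_id.
exact: (continuous_comp (IH x) (hc _)).
Qed.

Lemma pre_closure1 : local_homeomorphism T ->
  forall A : set X, preT T 1 (closure A) `<=` closure (preT T 1 A).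
Proof.
move=> [hc hl] A x /= hx B; rewrite nbhsE => -[B' [oB' B'x] sB].
have [U [oU Ux _ hU]] := hl x.
have oW : open (B' `&` U) by exact: openI.
have hTW := hU _ oW (@subIsetr _ _ _).
have : nbhs (T x) (T @` (B' `&` U)).
  by apply: open_nbhs_nbhs; split => //; exists x.
move=> /hx [a [Aa [w [B'w Uw] Twa]]].
by exists w; split; [rewrite /preT /= Twa | apply: sB].
Qed.

Lemma pre_closure : local_homeomorphism T ->
  forall n (A : set X), preT T n (closure A) `<=` closure (preT T n A).
Proof.
move=> hT; elim=> [|n IH] A; first by rewrite !preT0.
have -> : preT T n.+1 (closure A) = preT T n (preT T 1 (closure A)).
  by rewrite preTD add1n.
have -> : preT T n.+1 A = preT T n (preT T 1 A) by rewrite preTD add1n.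
move=> x hx; apply: (IH (preT T 1 A)).
have h1 := pre_closure1 hT A. exact: h1.
Qed.

Lemma closure_pre : continuous T ->
  forall n (A : set X), closure (preT T n A) `<=` preT T n (closure A).
Proof.
move=> hc n A.
have cl : closed (preT T n (closure A)).
  apply: preimage_closed; last exact: closed_closure.
  by move=> x _; exact: iter_cont.
rewrite [X in _ `<=` X](closure_id _).1 //.
apply: closureS => x hx; exact: (@subset_closure _ A _ hx).
Qed.

Lemma tower_levels N (U : nat -> set X) : open_rokhlin_tower T N U ->
  forall k, (k < N)%N -> U k = preT T k (U 0%N).
Proof.
move=> [_ hrec _]; elim=> [|k IH] hk; first by rewrite preT0.
rewrite hrec ?hk //= IH ?(ltnW hk) // preTD addn1 //.
Qed.

Lemma tower_core N (U : nat -> set X) : local_homeomorphism T ->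
  open_rokhlin_tower T N U ->
  forall p q z, (p < q < p + N)%N ->
  preT T p (closure (U 0%N)) z -> preT T q (closure (U 0%N)) z -> False.
Proof.
move=> hT hU p q z /andP [hpq hqN] h1 h2.
pose j := (q - p)%N.
have hj0 : (0 < j)%N by rewrite /j; lia.
have hjN : (j < N)%N by rewrite /j; lia.
have eq : q = (j + p)%N by rewrite /j; lia.
rewrite /preT /= eq iterD in h2.
have hy : closure (U j) (iter p T z).
  rewrite (tower_levels _ _ hU _ hjN); exact: (pre_closure hT _ _ _ h2).
have [_ _ hdis] := hU.
have := hdis 0%N j (leq_ltn_trans (leq0n _) hjN) hjN.
have hne : 0%N <> j by move=> h; rewrite -h in hj0.
move=> /(_ hne) /seteqP [/(_ (iter p T z)) H _].
by apply: H; split.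
Qed.

Lemma tower_core2 N (U : nat -> set X) : local_homeomorphism T ->
  open_rokhlin_tower T N U ->
  forall p q z, p <> q -> (p < q + N)%N -> (q < p + N)%N ->
  preT T p (closure (U 0%N)) z -> preT T q (closure (U 0%N)) z -> False.
Proof.
move=> hT hU p q z hne h1 h2 hp hq.
case: (ltngtP p q) => h.
- by apply: (tower_core _ _ hT hU p q z) hp hq; rewrite h h2.
- by apply: (tower_core _ _ hT hU q p z) hq hp; rewrite h h1.
- by [].
Qed.

Lemma finite_int_bound (E : set int) : finite_set E ->
  exists L : nat, forall e, E e -> (`|e|%N <= L)%N.
Proof.
move=> /finite_seqP [s ->]; elim: s => [|a s [L IH]].
  by exists 0%N => e.
exists (`|a|%N + L)%N => e /=; rewrite inE => /orP [/eqP -> | hs].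
  exact: leq_addr.
by apply: leq_trans (IH _ hs) _; exact: leq_addl.
Qed.

Lemma t1 (e : int) (L n N : nat) : (`|e|%N <= L)%N -> (L <= n)%N -> (n + L < N)%N ->
  exists k : nat, (k < N)%N /\ (k%:Z = e + n%:Z)%R.
Proof. move=> h1 h2 h3. exists (absz (e + n%:Z)%R). split; lia. Qed.

End Helpers.

Section Main.
Context {R : realType} {X : metricType R} (T : X -> X).

Lemma rok_to_tow d : local_homeomorphism T -> rokhlin_prop T d ->
  tower_prop T (2 * d + 1).
Proof.
move=> hT hR E fE.
have [L hL] := finite_int_bound _ fE.
pose N := (4 * L).+1.
have [m [U [hm hU hcov]]] := hR N isT.
pose M := (2 * L).+1.
pose s := (2 * m)%N.
pose tw i := if (i < m)%N then i else (i - m)%N.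
pose sh i := if (i < m)%N then 0%N else M.
pose V i := preT T (sh i) (U (tw i) 0%N).
have twm : forall i, (i < s)%N -> (tw i < m)%N.
  by move=> i; rewrite /tw /s; case: ifP => h; lia.
have hcont : continuous T by case: hT.
have ha : forall i a b z, (i < s)%N -> (a < N)%N -> (b < N)%N -> a <> b ->
    preT T a (closure (V i)) z -> preT T b (closure (V i)) z -> False.
  move=> i a b z hi ha hb hab h1 h2.
  have := tower_core2 T _ _ hT (hU _ (twm _ hi)) (sh i + a)%N (sh i + b)%N z.
  apply; [lia|lia|lia| |].
  - rewrite -preTD; apply: (closure_pre T hcont); exact: h1.
  - rewrite -preTD; apply: (closure_pre T hcont); exact: h2.
have hd : forall x : X, exists i n,
    [/\ (i < s)%N, `I_N n, preT T n (V i) x &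
        forall e, E e -> exists k, `I_N k /\ (k%:Z = e + n%:Z)%R].
  move=> x.
  have [i [k [im kN Uik]]] := hcov (iter L T x).
  rewrite (tower_levels T _ _ (hU _ im) _ kN) /preT /= -iterD in Uik.
  case: (ltnP (k + 2 * L) N) => hk.
  - exists i, (k + L)%N; split.
    + rewrite /s; lia.
    + rewrite /N /=; lia.
    + by rewrite /V /sh /tw im preT0.
    + move=> e /hL he; apply: t1 he _ _; lia.
  - exists (m + i)%N, (k - L - 1)%N; split.
    + rewrite /s; lia.
    + rewrite /N /=; lia.
    + rewrite /V /sh /tw !ifF; try lia.
      have -> : (m + i - m = i)%N by lia.
      rewrite preTD.
      have -> : (M + (k - L - 1) = k + L)%N by rewrite /M; lia.
      exact: Uik.
    + move=> e /hL he; apply: t1 he _ _; rewrite /N in hk *; lia.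
pose Q (A : set X) (j : nat) := (j < s)%N /\ exists n, (n < N)%N /\ A = preT T n (V j).
pose c (A : set X) : nat :=
  match pselect (exists j, Q A j) with
  | left h => proj1_sig (cid h)
  | right _ => 0%N
  end.
have cP : forall A, (exists j, Q A j) -> Q A (c A).
  move=> A h; rewrite /c; case: pselect => // h'.
  exact: (proj2_sig (cid h')).
have cPn : forall i n, (i < s)%N -> (n < N)%N -> Q (preT T n (V i)) (c (preT T n (V i))).
  by move=> i n hi hn; apply: cP; exists i; split => //; exists n.
exists s, V, (fun _ => `I_N); split.
- move=> i hi; split; last exact: finite_II.
  rewrite /V; apply: open_comp; first by move=> x _; exact: iter_cont.
  by have [/(_ 0%N isT) []] := hU _ (twm _ hi).
- move=> i a b hi ha' hb hab; apply/seteqP; split => // z [h1 h2].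
  exact: (ha i a b z hi ha' hb hab h1 h2).
- exists c; split.
  + move=> i n hi hn; have [hc _] := cPn i n hi hn.
    move: hc; rewrite /s; lia.
  + move=> i n j n' hi hn hj hn' hc hne.
    have [hk [n1 [hn1 e1]]] := cPn i n hi hn.
    have [_ [n2 [hn2 e2]]] := cPn j n' hj hn'.
    rewrite -hc in e2.
    apply/seteqP; split => // z [z1 z2].
    have hn12 : n1 <> n2 by move=> h; apply: hne; rewrite e1 e2 h.
    rewrite e1 in z1; rewrite e2 in z2.
    apply: (ha _ n1 n2 z hk hn1 hn2 hn12).
    * by apply: subset_closure; exact: z1.
    * by apply: subset_closure; exact: z2.
- by move=> x; have [i [n [? ? ? _]]] := hd x; exists i, n.
- by move=> x; have [i [n [? ? ? ?]]] := hd x; exists i, n.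
Qed.
End Main.

Theorem lemma5p2 (R : realType) (X : metricType R) (T : X -> X) :
  compact [set: X] -> local_homeomorphism T ->
  xle (dim_tow T) (xtwice_plus1 (dim_Rok T)).
Proof.
move=> _ hT.
rewrite /dim_Rok /least_dim.
case: (pselect (exists d, rokhlin_prop T d)) => [hr|_]; last by rewrite /dim_tow /least_dim; case: pselect.
case: ex_minnP => d /asboolP hd _ /=.
have ht := rok_to_tow T d hT hd.
rewrite /dim_tow /least_dim; case: pselect => [hr'|hn]; last by exfalso; apply: hn; exists (2 * d + 1)%N.
case: ex_minnP => d' _ hmin; apply: (hmin (2 * d + 1)%N); exact/asboolP.
Qed.
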